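(* A class $K$ of algebras of type $\tau$ is a hyperquasivariety if and only if $K$ (i) is closed under ultraproducts, (ii) is closed under (isomorphic copies of) subalgebras, (iii) is closed under direct products, (iv) contains a trivial (one-element) algebra, and (v) is deriverably closed, i.e. $\mathbf D(K)\subseteq K$.
   Context: A hypersubstitution $\sigma$ of type $\tau$ assigns to each $n$-ary operation symbol an $n$-ary term of type $\tau$, extended to all terms; the derived algebra $\mathbf A^\sigma$ has the same universe as $\mathbf A$ with each fundamental operation $f_\gamma$ replaced by $\sigma(f_\gamma)^{\mathbf A}$, and $\mathbf D(K)$ is the class of all derived algebras of members of $K$. A hyper-quasi-identity $\bigwedge_{i<n}(t_i=s_i)\to(t_n=s_n)$ (terms of type $\tau$, operation symbols read as hypervariables) is hypersatisfied in $\mathbf A$ if for every hypersubstitution $\sigma$ the quasi-identity $\bigwedge_{i<n}(\sigma(t_i)=\sigma(s_i))\to(\sigma(t_n)=\sigma(s_n))$ holds in $\mathbf A$. A hyperquasivariety is a class consisting exactly of the algebras of type $\tau$ that hypersatisfy all members of some set $\Sigma$ of hyper-quasi-identities. *)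

(* Defs.v *)
From mathcomp Require Import all_boot.
From Stdlib Require List.
Set Implicit Arguments. Unset Strict Implicit. Unset Printing Implicit Defensive.

Section UA.
(* A type tau: a type of operation symbols [sym] with arities [ar]. *)
Variables (sym : Type) (ar : sym -> nat).

Record algebra := Algebra {
  carrier :> Type;
  op : forall f : sym, ('I_(ar f) -> carrier) -> carrier;
  carrier_nonempty : inhabited carrier }.

Inductive term (V : Type) : Type :=
  | Var (x : V)
  | App (f : sym) (args : 'I_(ar f) -> term V).

Fixpoint subst (W V : Type) (t : term W) (s : W -> term V) : term V :=
  match t with
  | Var x => s x
  | App f a => @App V f (fun j => subst (a j) s)
  end.

Fixpoint eval (A : algebra) (V : Type) (v : V -> A) (t : term V) : A :=
  match t with
  | Var x => v x
  | App f a => @op A f (fun j => eval v (a j))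
  end.

Definition hypersubst := forall f : sym, term 'I_(ar f).

Fixpoint hsext (sigma : hypersubst) (V : Type) (t : term V) : term V :=
  match t with
  | Var x => @Var V x
  | App f a => subst (sigma f) (fun j => hsext sigma (a j))
  end.

Definition derived (A : algebra) (sigma : hypersubst) : algebra :=
  @Algebra (carrier A) (fun f args => eval args (sigma f)) (carrier_nonempty A).

(* Hyper-quasi-identities over the countable variable set nat:
   /\_{i<n} (t_i = s_i) -> (t_n = s_n). *)
Record hqi := HQI {
  premises : seq (term nat * term nat);
  conclusion : term nat * term nat }.

Definition qi_holds (A : algebra) (ps : seq (term nat * term nat))
  (c : term nat * term nat) : Prop :=
  forall v : nat -> A,
    (forall p, List.In p ps -> eval v p.1 = eval v p.2) ->
    eval v c.1 = eval v c.2.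

Definition hypersatisfies (A : algebra) (q : hqi) : Prop :=
  forall sigma : hypersubst,
    qi_holds A [seq (hsext sigma p.1, hsext sigma p.2) | p <- premises q]
               (hsext sigma (conclusion q).1, hsext sigma (conclusion q).2).

Definition hyperquasivariety (K : algebra -> Prop) : Prop :=
  exists Sigma : hqi -> Prop,
    forall A : algebra, K A <-> (forall q, Sigma q -> hypersatisfies A q).

Definition is_hom (A B : algebra) (h : A -> B) : Prop :=
  forall f (args : 'I_(ar f) -> A), h (@op A f args) = @op B f (fun j => h (args j)).

(* B is (isomorphic to) a subalgebra of A: there is an embedding B -> A. *)
Definition closed_S (K : algebra -> Prop) : Prop :=
  forall A B : algebra, K A ->
    forall h : B -> A, injective h -> is_hom h -> K B.

(* B is (isomorphic to) the direct product of the family (A i). *)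
Definition is_product (I : Type) (A : I -> algebra) (B : algebra) : Prop :=
  exists h : B -> (forall i, A i),
    bijective h /\
    forall f (args : 'I_(ar f) -> B),
      h (@op B f args) = fun i => @op (A i) f (fun j => h (args j) i).

Definition closed_P (K : algebra -> Prop) : Prop :=
  forall (I : Type) (A : I -> algebra) (B : algebra),
    (forall i, K (A i)) -> is_product A B -> K B.

Definition ultrafilter (I : Type) (U : (I -> Prop) -> Prop) : Prop :=
  [/\ U (fun _ => True),
      ~ U (fun _ => False),
      (forall X Y : I -> Prop, U X -> (forall i, X i -> Y i) -> U Y),
      (forall X Y : I -> Prop, U X -> U Y -> U (fun i => X i /\ Y i)) &
      (forall X : I -> Prop, U X \/ U (fun i => ~ X i))].

(* B is (isomorphic to) the ultraproduct of (A i) modulo U: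
   a surjective homomorphism from the direct product onto B whose kernel is
   U-almost-everywhere equality. *)
Definition is_ultraproduct (I : Type) (A : I -> algebra)
  (U : (I -> Prop) -> Prop) (B : algebra) : Prop :=
  exists h : (forall i, A i) -> B,
    [/\ (forall b : B, exists x, h x = b),
        (forall x y, h x = h y <-> U (fun i => x i = y i)) &
        (forall f (args : 'I_(ar f) -> forall i, A i),
           h (fun i => @op (A i) f (fun j => args j i))
           = @op B f (fun j => h (args j)))].

Definition closed_Pu (K : algebra -> Prop) : Prop :=
  forall (I : Type) (A : I -> algebra) (U : (I -> Prop) -> Prop) (B : algebra),
    ultrafilter U -> (forall i, K (A i)) -> is_ultraproduct A U B -> K B.

Definition has_trivial (K : algebra -> Prop) : Prop :=
  exists A : algebra, K A /\ forall x y : A, x = y.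

Definition closed_D (K : algebra -> Prop) : Prop :=
  forall (A : algebra) (sigma : hypersubst), K A -> K (derived A sigma).

End UA.

(* Main.v *)
Require Import Defs.
From mathcomp Require Import all_boot.
From mathcomp Require Import boolp classical_sets filter.
From Stdlib Require Import FunctionalExtensionality PropExtensionality ClassicalEpsilon Classical.
From Stdlib Require List.
Set Implicit Arguments. Unset Strict Implicit. Unset Printing Implicit Defensive.

Section Lemmas.
Variables (sym : Type) (ar : sym -> nat).
Implicit Types (A B : algebra ar).

Lemma subst_subst (U V W : Type) (t : term ar U) (s1 : U -> term ar V) (s2 : V -> term ar W) :
  subst (subst t s1) s2 = subst t (fun x => subst (s1 x) s2).
Proof.
elim: t => [x|f a IH] //=; congr App; apply: functional_extensionality => j; exact: IH.
Qed.

Lemma eval_subst A (W V : Type) (t : term ar W) (s : W -> term ar V) (v : V -> A) :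
  eval v (subst t s) = eval (fun x => eval v (s x)) t.
Proof.
elim: t => [x|f a IH] //=; congr op; apply: functional_extensionality => j; exact: IH.
Qed.

Lemma hsext_subst (sg : hypersubst ar) (W V : Type) (t : term ar W) (s : W -> term ar V) :
  hsext sg (subst t s) = subst (hsext sg t) (fun x => hsext sg (s x)).
Proof.
elim: t => [x|f a IH] //=; rewrite subst_subst; congr subst.
apply: functional_extensionality => j; exact: IH.
Qed.

Definition hcomp (sg tau : hypersubst ar) : hypersubst ar := fun f => hsext sg (tau f).

Lemma hsext_comp (sg tau : hypersubst ar) (V : Type) (t : term ar V) :
  hsext sg (hsext tau t) = hsext (hcomp sg tau) t.
Proof.
elim: t => [x|f a IH] //=; rewrite hsext_subst /hcomp; congr subst.
apply: functional_extensionality => j; exact: IH.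
Qed.

Lemma eval_derived A (sg : hypersubst ar) (V : Type) (w : V -> A) (t : term ar V) :
  @eval _ _ (derived A sg) V w t = eval w (hsext sg t).
Proof.
elim: t => [x|f a IH] //=; rewrite eval_subst /=.
congr eval; apply: functional_extensionality => j; exact: IH.
Qed.

Lemma eval_hom A B (h : A -> B) (V : Type) (v : V -> A) (t : term ar V) :
  is_hom h -> h (eval v t) = eval (fun x => h (v x)) t.
Proof.
move=> hh; elim: t => [x|f a IH] //=; rewrite hh; congr op.
apply: functional_extensionality => j; exact: IH.
Qed.

Lemma In_map (X Y : Type) (g : X -> Y) (l : seq X) (y : Y) :
  List.In y (map g l) -> exists x, List.In x l /\ y = g x.
Proof.
elim: l => [|x l IH] //= [<-|/IH [z [Hz ->]]]; [by exists x; split; [left|]| by exists z; split; [right|]].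
Qed.

Lemma map_In (X Y : Type) (g : X -> Y) (l : seq X) (x : X) :
  List.In x l -> List.In (g x) (map g l).
Proof. elim: l => [|z l IH] //= [->|/IH]; [by left|by right]. Qed.

Definition hs (sg : hypersubst ar) (p : term ar nat * term ar nat) :=
  (hsext sg p.1, hsext sg p.2).

Lemma qi_D A sg ps c : qi_holds A (map (hs sg) ps) (hs sg c) -> qi_holds (derived A sg) ps c.
Proof.
move=> H w Hp; rewrite !eval_derived; apply: (H w) => p Hin; have [p0 [Hp0 ->]] := In_map Hin; rewrite /=.
by rewrite -!eval_derived; apply: Hp.
Qed.

Lemma hyp_D A sg q : hypersatisfies A q -> hypersatisfies (derived A sg) q.
Proof.
move=> H tau; apply: qi_D.
have E : forall p, hs sg (hs tau p) = hs (hcomp sg tau) p.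
  by move=> p; rewrite /hs /= !hsext_comp.
rewrite -map_comp.
have -> : (hs sg \o (fun p => (hsext tau p.1, hsext tau p.2))) = hs (hcomp sg tau).
  by apply: functional_extensionality => p /=; apply: E.
rewrite /hs /= !hsext_comp; exact: H.
Qed.

Lemma qi_S A B (h : B -> A) ps c : injective h -> is_hom h -> qi_holds A ps c -> qi_holds B ps c.
Proof.
move=> hi hh H w Hp; apply: hi; rewrite !eval_hom //; apply: H => p Hp'.
by rewrite -!eval_hom // (Hp p Hp').
Qed.

Lemma eval_prod (I : Type) (A : I -> algebra ar) B (h : B -> forall i, A i)
  (hh : forall f (args : 'I_(ar f) -> B),
      h (@op _ _ B f args) = fun i => @op _ _ (A i) f (fun j => h (args j) i))
  (V : Type) (w : V -> B) (t : term ar V) :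
  h (eval w t) = fun i => eval (fun n => h (w n) i) t.
Proof.
elim: t => [x|f a IH] //=; rewrite hh; apply: functional_extensionality_dep => i.
congr op; apply: functional_extensionality => j; by rewrite IH.
Qed.

Lemma qi_P (I : Type) (A : I -> algebra ar) B ps c :
  is_product A B -> (forall i, qi_holds (A i) ps c) -> qi_holds B ps c.
Proof.
move=> [h [[g hK _] hh]] H w Hp.
apply: (can_inj hK); rewrite !(eval_prod hh); apply: functional_extensionality_dep => i.
apply: H => p Hp'.
have := congr1 (fun F => F i) (congr1 h (Hp p Hp')); by rewrite !(eval_prod hh).
Qed.

Lemma U_all (I X : Type) (U : (I -> Prop) -> Prop) (ps : seq X) (P : X -> I -> Prop) :
  ultrafilter U -> (forall p, List.In p ps -> U (P p)) ->
  U (fun i => forall p, List.In p ps -> P p i).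
Proof.
move=> [UT _ US UI _]; elim: ps => [|x ps IH] H.
  by apply: (US _ _ UT) => i _ p [].
have := UI _ _ (H x (or_introl erefl)) (IH (fun p Hp => H p (or_intror Hp))).
move=> Hc; apply: (US _ _ Hc) => i [H1 H2] p /= [<-|/H2] //.
Qed.

Lemma qi_Pu (I : Type) (A : I -> algebra ar) (U : (I -> Prop) -> Prop) B ps c :
  ultrafilter U -> is_ultraproduct A U B -> (forall i, qi_holds (A i) ps c) ->
  qi_holds B ps c.
Proof.
move=> UU [h [hs hk hh]] H w Hp.
pose x := fun n => proj1_sig (constructive_indefinite_description _ (hs (w n))).
have xP : forall n, h (x n) = w n.
  by move=> n; rewrite /x; case: constructive_indefinite_description.
have ev : forall t : term ar nat, eval w t = h (fun i => eval (fun n => x n i) t).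
  elim=> [n|f a IH] /=; first by rewrite xP.
  rewrite hh; congr op; apply: functional_extensionality => j; exact: IH.
rewrite !ev; apply/hk.
have Hall := @U_all I _ U ps (fun p i => eval (fun n => x n i) p.1 = eval (fun n => x n i) p.2) UU
  (fun p Hp' => proj1 (hk _ _) (etrans (esym (ev p.1)) (etrans (Hp p Hp') (ev p.2)))).
case: UU => _ _ US _ _; apply: (US _ _ Hall) => i Hi; exact: H.
Qed.


Lemma qi_D_rev A sg ps c : qi_holds (derived A sg) ps c -> qi_holds A (map (hs sg) ps) (hs sg c).
Proof.
move=> H w Hp; rewrite /= -!eval_derived; apply: H => p Hin.
rewrite !eval_derived; exact: (Hp _ (map_In (hs sg) Hin)).
Qed.

Definition id_hs : hypersubst ar := fun f => App (fun j => Var ar j).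

Lemma hsext_id (V : Type) (t : term ar V) : hsext id_hs t = t.
Proof.
elim: t => [x|f a IH] //=; congr App; apply: functional_extensionality => j; exact: IH.
Qed.

Lemma In_cat1 (X : Type) (s t : seq X) x : List.In x s -> List.In x (s ++ t).
Proof. elim: s => [|y s IH] //= [->|/IH]; [by left|by right]. Qed.
Lemma In_cat2 (X : Type) (s t : seq X) x : List.In x t -> List.In x (s ++ t).
Proof. elim: s => [|y s IH] //= /IH; by right. Qed.
Lemma In_cat (X : Type) (s t : seq X) x : List.In x (s ++ t) -> List.In x s \/ List.In x t.
Proof.
elim: s => [|y s IH] /=; first by right.
case=> [->|/IH [H|H]]; [by left; left|by left; right|by right].
Qed.
Lemma In_flatten (X : Type) (L : seq (seq X)) s x : List.In s L -> List.In x s -> List.In x (flatten L).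
Proof.
elim: L => [|s' L IH] //= [->|/IH H] Hx; [exact: In_cat1|apply: In_cat2; exact: H].
Qed.
Lemma in_In (X : eqType) (s : seq X) x : x \in s -> List.In x s.
Proof. elim: s => [|y s IH] //=; rewrite in_cons => /orP [/eqP ->|/IH]; [by left|by right]. Qed.

Section Ultra.
Variables (I : Type) (C : I -> algebra ar) (U : (I -> Prop) -> Prop).
Hypothesis UU : ultrafilter U.

Definition eqU (x y : forall i, C i) := U (fun i => x i = y i).
Lemma eqU_refl x : eqU x x.
Proof. case: UU => UT _ US _ _; exact: (US _ _ UT). Qed.
Lemma eqU_sym x y : eqU x y -> eqU y x.
Proof. case: UU => _ _ US _ _ H; exact: (US _ _ H). Qed.
Lemma eqU_trans x y z : eqU x y -> eqU y z -> eqU x z.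
Proof.
case: UU => _ _ US UI _ H1 H2; apply: (US _ _ (UI _ _ H1 H2)) => i [-> ->] //.
Qed.

Definition cls (x : forall i, C i) := fun y => eqU x y.
Definition Q := {S : (forall i, C i) -> Prop | exists x, S = cls x}.
Lemma Q_ext (S1 S2 : Q) : proj1_sig S1 = proj1_sig S2 -> S1 = S2.
Proof.
case: S1 S2 => [S1 p1] [S2 p2] /= E; subst S2; congr exist; apply: proof_irrelevance.
Qed.
Lemma cls_eq x y : cls x = cls y <-> eqU x y.
Proof.
split=> [E|H].
  have : cls y y by exact: eqU_refl.
  by rewrite -E.
apply: functional_extensionality => z; apply: propositional_extensionality; split.
  by move=> Hz; apply: eqU_trans (eqU_sym H) Hz.
by move=> Hz; apply: eqU_trans H Hz.
Qed.
Definition rep (S : Q) : forall i, C i :=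
  proj1_sig (constructive_indefinite_description _ (proj2_sig S)).
Lemma rep_cls S : cls (rep S) = proj1_sig S.
Proof. rewrite /rep; case: constructive_indefinite_description => x /= ->; by []. Qed.
Definition hQ (x : forall i, C i) : Q := exist _ (cls x) (ex_intro _ x erefl).
Definition opQ (f : sym) (args : 'I_(ar f) -> Q) : Q :=
  hQ (fun i => @op _ _ (C i) f (fun j => rep (args j) i)).
Definition x0 : forall i, C i := fun i => epsilon (carrier_nonempty (C i)) (fun _ => True).
Definition UB : algebra ar := @Algebra _ _ Q opQ (inhabits (hQ x0)).

Lemma ultra_exists : is_ultraproduct C U UB.
Proof.
exists hQ; split.
- move=> [S [x E]]; exists x; apply: Q_ext => /=; by rewrite E.
- move=> x y; split=> [E|H].
    by apply/cls_eq; exact: (congr1 (@proj1_sig _ _) E).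
  by apply: Q_ext => /=; apply/cls_eq.
- move=> f args; apply: Q_ext => /=; apply/cls_eq.
  have Hr : forall j, U (fun i => args j i = rep (hQ (args j)) i).
    move=> j; apply/cls_eq; by rewrite rep_cls.
  have Hall := @U_all I _ U (enum 'I_(ar f)) (fun j i => args j i = rep (hQ (args j)) i) UU
      (fun j _ => Hr j).
  case: UU => _ _ US _ _; apply: (US _ _ Hall) => i Hi /=; congr op.
  apply: functional_extensionality => j; apply: Hi; apply: in_In; exact: mem_enum.
Qed.
End Ultra.

Definition prodA (I : Type) (B : I -> algebra ar) : algebra ar :=
  @Algebra _ _ (forall i, B i) (fun f args => fun i => @op _ _ (B i) f (fun j => args j i))
   (inhabits (x0 B)).

Lemma prodA_is_product (I : Type) (B : I -> algebra ar) : is_product B (prodA B).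
Proof. exists id; split => //; by exists id. Qed.

End Lemmas.


Lemma uf_extend (T : Type) (F : (T -> Prop) -> Prop) :
  F (fun _ => True) -> ~ F (fun _ => False) ->
  (forall X Y : T -> Prop, F X -> (forall i, X i -> Y i) -> F Y) ->
  (forall X Y : T -> Prop, F X -> F Y -> F (fun i => X i /\ Y i)) ->
  exists U, ultrafilter U /\ forall X, F X -> U X.
Proof.
move=> FT FF FS FI.
have PF : ProperFilter F.
  split; first exact: FF.
  split; [exact: FT| move=> A B; exact: FI | move=> A B AB FA; exact: (FS _ _ FA AB)].
have [G [UG sFG]] := ultraFilterLemma PF.
exists G; split; last exact: sFG.
have GP : ProperFilter G by case: UG.
split.
- exact: (@filterT _ G).
- exact: (@filter_not_empty _ G GP).
- move=> X Y GX XY; exact: (@filterS _ G _ X Y XY GX).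
- move=> X Y GX GY; exact: (@filterI _ G _ X Y GX GY).
- move=> X; exact: (in_ultra_setVsetC X UG).
Qed.


Section Main.
Variables (sym : Type) (ar : sym -> nat).

Lemma names (A : Type) (E : seq A) : inhabited A ->
  exists (nm : A -> nat) (rn : nat -> A), forall x, List.In x E -> rn (nm x) = x.
Proof.
move=> [a0]; elim: E => [|x E [nm [rn H]]].
  by exists (fun _ => 0), (fun _ => a0).
exists (fun y => if excluded_middle_informative (y = x) then 0 else (nm y).+1).
exists (fun k => if k is k'.+1 then rn k' else x).
move=> y Hy; case: excluded_middle_informative => [e|ne]; first by rewrite /= e.
case: Hy => [E'|/H //]; by case: ne.
Qed.

Variable (K : algebra ar -> Prop).
Hypothesis KD : closed_D K.
Variable (A : algebra ar).
Hypothesis HA : forall q, (forall C, K C -> hypersatisfies C q) -> hypersatisfies A q.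

Definition Fct := {f : sym & (A * ('I_(ar f) -> A))%type}.
Definition fact_true (p : Fct) := (projT2 p).1 = @op _ _ A (projT1 p) (projT2 p).2.
Definition fact_sat (C : algebra ar) (v : A -> C) (p : Fct) :=
  v (projT2 p).1 = @op _ _ C (projT1 p) (fun j => v ((projT2 p).2 j)).
Definition tr (nm : A -> nat) (p : Fct) : term ar nat * term ar nat :=
  (Var ar (nm (projT2 p).1), @App _ _ nat (projT1 p) (fun j => Var ar (nm ((projT2 p).2 j)))).
Definition elems (p : Fct) : seq A :=
  (projT2 p).1 :: map (projT2 p).2 (enum 'I_(ar (projT1 p))).

Definition Idx := {l : seq Fct | forall p, List.In p l -> fact_true p}.

Lemma exl (a b : A) : a <> b -> forall l : Idx, exists (C : algebra ar) (v : A -> C),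
  K C /\ v a <> v b /\ forall p, List.In p (proj1_sig l) -> fact_sat v p.
Proof.
move=> ab [l Hl] /=; apply: NNPP => Hn.
have [nm [rn Hr]] := names (a :: b :: flatten (map elems l)) (carrier_nonempty A).
pose q := HQI (map (tr nm) l) (Var ar (nm a), Var ar (nm b)).
have Sq : forall C, K C -> hypersatisfies C q.
  move=> C KC sg; apply: (qi_D_rev (ps := map (tr nm) l) (c := (Var ar (nm a), Var ar (nm b)))).
  move=> w Hw /=; apply: NNPP => ne; apply: Hn.
  exists (derived C sg), (fun x => w (nm x)); split; first exact: KD.
  split; first exact: ne.
  move=> p Hp; exact: (Hw _ (map_In (tr nm) Hp)).
have := @HA q Sq (@id_hs sym ar) rn.
have Em : forall (ps : seq (term ar nat * term ar nat)), map (hs (@id_hs sym ar)) ps = ps.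
  elim=> [|p ps IH] //=; rewrite IH /hs !hsext_id; by case: p.
rewrite /= Em.
have Ha : List.In a (a :: b :: flatten (map elems l)) by left.
have Hb : List.In b (a :: b :: flatten (map elems l)) by right; left.
rewrite (Hr _ Ha) (Hr _ Hb) => H; apply: ab; apply: H => p Hp.
have [p0 [Hp0 ->]] := In_map Hp.
have Hel : forall x, List.In x (elems p0) -> rn (nm x) = x.
  move=> x Hx; apply: Hr; right; right; apply: (In_flatten (s := elems p0)) => //.
  exact: map_In.
rewrite /= [X in X = _]Hel; last by left.
rewrite (Hl _ Hp0) /fact_true; congr op; apply: functional_extensionality => j.
symmetry; apply: Hel; right; apply: map_In; apply: in_In; exact: mem_enum.
Qed.


Hypothesis KPu : closed_Pu K.
Hypothesis KS : closed_S K.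
Hypothesis KP : closed_P K.

Lemma sep (a b : A) : a <> b ->
  exists (C : algebra ar) (g : A -> C), K C /\ is_hom g /\ g a <> g b.
Proof.
move=> ab.
pose s l := constructive_indefinite_description _ (exl ab l).
pose Cf l := proj1_sig (s l).
pose vs l := constructive_indefinite_description _ (proj2_sig (s l)).
pose vf l : A -> Cf l := proj1_sig (vs l).
have vP : forall l, K (Cf l) /\ vf l a <> vf l b /\
    forall p, List.In p (proj1_sig l) -> fact_sat (vf l) p.
  move=> l; exact: (proj2_sig (vs l)).
pose F (X : Idx -> Prop) := exists L : seq Fct, (forall p, List.In p L -> fact_true p) /\
   forall l : Idx, (forall p, List.In p L -> List.In p (proj1_sig l)) -> X l.
have [U [UU FU]] : exists U, ultrafilter U /\ forall X, F X -> U X.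
  apply: uf_extend.
  - by exists [::]; split.
  - move=> [L [HL HX]]; exact: (HX (exist _ L HL)).
  - move=> X Y [L [HL HX]] XY; exists L; split => // l Hl; apply: XY; exact: HX.
  - move=> X Y [L1 [HL1 HX1]] [L2 [HL2 HX2]]; exists (L1 ++ L2); split.
      by move=> p Hp; case: (In_cat Hp) => [/HL1|/HL2].
    move=> l Hl; split; [apply: HX1|apply: HX2] => p Hp; apply: Hl;
      [exact: In_cat1|exact: In_cat2].
have [h [_ hk hh]] := ultra_exists Cf UU.
have KB : K (UB Cf U) by apply: (KPu UU (fun l => (vP l).1) (ultra_exists Cf UU)).
exists (UB Cf U), (fun x => h (fun l => vf l x)); split => //; split.
  move=> f args; rewrite -hh; apply/hk; apply: FU.
  exists [:: existT _ f (op args, args)]; split.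
    by move=> p [<-|[]].
  move=> l Hl; exact: ((vP l).2.2 _ (Hl _ (or_introl erefl))).
move=> /hk E; case: UU => _ UF US _ _; apply: UF; apply: (US _ _ E) => l Hl.
exact: (vP l).2.1.
Qed.

Lemma inK : K A.
Proof.
pose J := {p : A * A | p.1 <> p.2}.
have sepJ : forall p : J, exists (C : algebra ar) (g : A -> C),
    K C /\ is_hom g /\ g (proj1_sig p).1 <> g (proj1_sig p).2.
  move=> p; exact: (sep (proj2_sig p)).
pose s p := constructive_indefinite_description _ (sepJ p).
pose Cp p := proj1_sig (s p).
pose gs p := constructive_indefinite_description _ (proj2_sig (s p)).
pose gp p : A -> Cp p := proj1_sig (gs p).
have gP : forall p, K (Cp p) /\ is_hom (gp p) /\ gp p (proj1_sig p).1 <> gp p (proj1_sig p).2.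
  move=> p; exact: (proj2_sig (gs p)).
have KPi : K (prodA Cp) by apply: (KP (fun p => (gP p).1) (prodA_is_product Cp)).
apply: (KS KPi (h := fun x => ((fun p => gp p x) : prodA Cp))).
  move=> x y E; apply: NNPP => ne.
  have := congr1 (fun G => G (exist _ (x, y) ne)) E.
  exact: (gP (exist _ (x, y) ne)).2.2.
move=> f args; apply: functional_extensionality_dep => p /=.
exact: (gP p).2.1.
Qed.

End Main.

Theorem theorem5p5 (sym : Type) (ar : sym -> nat) (K : algebra ar -> Prop) :
  hyperquasivariety K <->
  [/\ closed_Pu K, closed_S K, closed_P K, has_trivial K & closed_D K].
Proof.
split.
  move=> [Sg HK]; split.
  - move=> I A U B UU HA HB; apply/HK => q Sq sg.
    apply: (qi_Pu UU HB) => i; exact: (proj1 (HK _) (HA i) q Sq sg).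
  - move=> A B HA h hi hh; apply/HK => q Sq sg.
    exact: (qi_S hi hh (proj1 (HK _) HA q Sq sg)).
  - move=> I A B HA HB; apply/HK => q Sq sg.
    apply: (qi_P HB) => i; exact: (proj1 (HK _) (HA i) q Sq sg).
  - exists (@Algebra _ ar unit (fun _ _ => tt) (inhabits tt)); split; last by case; case.
    apply/HK => q _ sg v _; by case: (eval v _); case: (eval v _).
  - move=> A sg HA; apply/HK => q Sq; exact: hyp_D (proj1 (HK _) HA q Sq).
move=> [KPu KS KP _ KD].
exists (fun q => forall C, K C -> hypersatisfies C q) => A; split.
  by move=> HA q Sq; apply: Sq.
move=> HA; exact: (inK KD HA KPu KS KP).
Qed.
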